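(* Let $\mathcal{H}_1$ and $\mathcal{H}_2$ be two hypertrees with the same vertex set $V$. Then $\mathcal{H}_1$ and $\mathcal{H}_2$ are equivalent if and only if they have the same basic sets. Moreover, if $\mathcal{H}_1$ and $\mathcal{H}_2$ have a common host tree $T$, then they are equivalent if and only if $I_{\mathcal{H}_1}(uv)=I_{\mathcal{H}_2}(uv)$ for every edge $uv$ of $T$.
   Context: A hypergraph $\mathcal{H}$ has a finite vertex set $V(\mathcal{H})$ and a finite family of nonempty subsets (edges). A host tree of $\mathcal{H}$ is a tree with vertex set $V(\mathcal{H})$ in which every edge induces a connected subgraph; $\mathcal{H}$ is a hypertree if it has one. Hypergraphs on the same vertex set are equivalent if they have the same host trees. For $V'\subseteq V(\mathcal{H})$, $I_\mathcal{H}(V')$ is the intersection of all edges of $\mathcal{H}$ containing $V'$, or $V(\mathcal{H})$ if none does; $I_\mathcal{H}(uv)=I_\mathcal{H}(\{u,v\})$. A union of sets is connected if the intersection graph of the sets is connected. $Comp(\mathcal{H})$ is the hypergraph without repeated edges on $V(\mathcal{H})$ whose edges are $V(\mathcal{H})$, all one-element subsets, and all proper subsets obtainable from edges of $\mathcal{H}$ by repeated nonempty intersections and connected unions. A basic set of $\mathcal{H}$ is an edge of $Comp(\mathcal{H})$ with more than one vertex that is not a connected union of strictly smaller edges of $Comp(\mathcal{H})$. *)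

(* Defs.v *)
From mathcomp Require Import all_boot.
Set Implicit Arguments. Unset Strict Implicit. Unset Printing Implicit Defensive.

(* A hypergraph on the (finite) vertex set T is a finite family (sequence,
   repetitions allowed) of subsets of T; nonemptiness of edges is a
   hypothesis of the theorem. *)
Definition hypergraph (T : finType) := seq {set T}.

Section Defs.
Variable T : finType.

(* A graph on T is given by its set of edges; a graph edge is a 2-element set. *)
Definition gadj (E : {set {set T}}) : rel T :=
  [rel x y | (x != y) && ([set x; y] \in E)].

Definition induced_connected (E : {set {set T}}) (S : {set T}) : bool :=
  [forall x in S, forall y in S,
     connect [rel a b | [&& a \in S, b \in S & gadj E a b]] x y].

Definition is_tree (E : {set {set T}}) : Prop :=
  [/\ [set: T] != set0,
      (forall e, e \in E -> #|e| = 2),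
      induced_connected E [set: T] &
      (forall e, e \in E -> ~~ induced_connected (E :\ e) [set: T])].

Definition host_tree (H : hypergraph T) (E : {set {set T}}) : Prop :=
  is_tree E /\ (forall e, e \in H -> induced_connected E e).

Definition hypertree (H : hypergraph T) : Prop := exists E, host_tree H E.

Definition equivalent (H1 H2 : hypergraph T) : Prop :=
  forall E, host_tree H1 E <-> host_tree H2 E.

(* I_H(V'): intersection of all edges containing V' (setT if none). *)
Definition Icap (H : hypergraph T) (V' : {set T}) : {set T} :=
  \bigcap_(e <- H | V' \subset e) e.

Definition family_connected (F : {set {set T}}) : bool :=
  [forall A in F, forall B in F,
     connect [rel X Y | [&& X \in F, Y \in F & X :&: Y != set0]] A B].

Inductive obtainable (H : hypergraph T) : {set T} -> Prop :=
| ob_edge e : e \in H -> obtainable H e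
| ob_cap A B : obtainable H A -> obtainable H B -> A :&: B != set0 ->
    obtainable H (A :&: B)
| ob_cup (F : {set {set T}}) : F != set0 ->
    (forall A, A \in F -> obtainable H A) -> family_connected F ->
    obtainable H (\bigcup_(A in F) A).

Definition comp_edge (H : hypergraph T) (S : {set T}) : Prop :=
  S = [set: T] \/ (exists x, S = [set x]) \/ (obtainable H S /\ S != [set: T]).

Definition basic_set (H : hypergraph T) (S : {set T}) : Prop :=
  comp_edge H S /\ 1 < #|S| /\
  ~ (exists F : {set {set T}},
       [/\ F != set0,
           (forall A, A \in F -> comp_edge H A /\ A \proper S),
           family_connected F &
           \bigcup_(A in F) A = S]).

End Defs.

(* Main.v *)
Require Import Defs.
From mathcomp Require Import all_boot.
From Stdlib Require Import Classical.
Set Implicit Arguments. Unset Strict Implicit. Unset Printing Implicit Defensive.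

Lemma conn_indG (T' : finType) (r : rel T') (P : T' -> Prop) x y :
  (forall a b, r a b -> P a -> P b) -> connect r x y -> P x -> P y.
Proof.
move=> step /connectP[p]; elim: p x => [|z p IH] x /=; first by move=> _ ->.
case/andP=> rxz pz ey Px; exact: IH z pz ey (step _ _ rxz Px).
Qed.

Section Aux.
Variable T : finType.
Implicit Types (E : {set {set T}}) (S A B g f e : {set T}) (x y u v a b : T).

Lemma conn_ind (r : rel T) (P : T -> Prop) x y :
  (forall a b, r a b -> P a -> P b) -> connect r x y -> P x -> P y.
Proof.
move=> step /connectP[p]; elim: p x => [|z p IH] x /=; first by move=> _ ->.
case/andP=> rxz pz ey Px; exact: IH z pz ey (step _ _ rxz Px).
Qed.

Lemma conn_mono (r r' : rel T) x y :
  (forall a b, r a b -> r' a b) -> connect r x y -> connect r' x y.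
Proof.
move=> H c; apply: (@conn_ind r (fun z => connect r' x z) x y) => //.
by move=> a b rab Ha; exact: connect_trans Ha (connect1 (H _ _ rab)).
Qed.

Lemma set2C x y : [set x; y] = [set y; x] :> {set T}.
Proof. by apply/setP=> z; rewrite !inE orbC. Qed.

Lemma gadj_sym E : symmetric (gadj E).
Proof. by move=> x y; rewrite /gadj /= [y == x]eq_sym set2C. Qed.

Lemma gadj_connect_sym E x y : connect (gadj E) x y = connect (gadj E) y x.
Proof. exact: (sym_connect_sym (gadj_sym E)). Qed.

Definition rrel (A : {set T}) (r : rel T) : rel T :=
  [rel a b | [&& a \in A, b \in A & r a b]].

Lemma rrel_sym A (r : rel T) : symmetric r -> symmetric (rrel A r).
Proof. move=> s x y; rewrite /rrel /= (s x y); by case: (x \in A); case: (y \in A). Qed.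

Lemma ic_def E S : induced_connected E S =
  [forall x in S, forall y in S, connect (rrel S (gadj E)) x y].
Proof. by []. Qed.

Lemma icP E S : reflect (forall x y, x \in S -> y \in S -> connect (rrel S (gadj E)) x y)
   (induced_connected E S).
Proof.
apply: (iffP idP).
  by move=> /forall_inP H x y xS yS; move/forall_inP: (H x xS); apply.
by move=> H; apply/forall_inP=> x xS; apply/forall_inP=> y yS; apply: H.
Qed.

Lemma conn_restr A (r : rel T) x y : connect (rrel A r) x y -> x \in A -> y \in A.
Proof.
move=> c; apply: (@conn_ind _ (fun z => z \in A) x y) c => a b /= /and3P[]//.
Qed.

Lemma icT E : induced_connected E [set: T] <-> (forall x y, connect (gadj E) x y).
Proof.
split.
  move/icP=> H x y; apply: conn_mono (H x y (in_setT _) (in_setT _)).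
  by move=> a b /and3P[].
move=> H; apply/icP=> x y _ _; apply: conn_mono (H x y) => a b.
by rewrite /rrel /= !in_setT.
Qed.

Lemma ic_small E S : #|S| <= 1 -> induced_connected E S.
Proof.
move=> c; apply/icP=> x y xS yS.
have -> : x = y.
  apply/eqP; apply: contraLR c; rewrite -ltnNge => nxy.
  rewrite (cardD1 x) xS ltnS lt0n; apply/pred0Pn; exists y.
  by rewrite !inE yS eq_sym nxy.
exact: connect0.
Qed.

Lemma pair_eq x y a b : x != y -> [set x; y] = [set a; b] :> {set T} ->
  (x = a /\ y = b) \/ (x = b /\ y = a).
Proof.
move=> nxy e.
have : x \in [set a; b] by rewrite -e !inE eqxx.
have : y \in [set a; b] by rewrite -e !inE eqxx orbT.
rewrite !inE => /orP[]/eqP ey /orP[]/eqP ex; subst; rewrite ?eqxx // in nxy.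
- by right.
- by left.
Qed.

Lemma card2_neq x y : #|[set x; y]| = 2 -> x != y.
Proof.
by move=> c; apply/eqP=> exy; move: c; rewrite exy setUid cards1.
Qed.


Lemma rrel_avoid E A u v a b : (u \notin A) || (v \notin A) ->
  rrel A (gadj E) a b -> gadj (E :\ [set u; v]) a b.
Proof.
move=> nA /and3P[aA bA /andP[nab abE]].
rewrite /gadj /= nab in_setD1 abE andbT; apply/negP=> /eqP e.
have uA : u \in A.
  have : u \in [set a; b] by rewrite e !inE eqxx.
  by rewrite !inE => /orP[]/eqP->.
have vA : v \in A.
  have : v \in [set a; b] by rewrite e !inE eqxx orbT.
  by rewrite !inE => /orP[]/eqP->.
by rewrite uA vA in nA.
Qed.

Lemma tree_conn E : is_tree E -> forall x y, connect (gadj E) x y.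
Proof. by case=> _ _ /icT. Qed.

Lemma tree_card E e : is_tree E -> e \in E -> #|e| = 2.
Proof. by case=> _ H _ _; apply: H. Qed.

Lemma tree_neq E u v : is_tree E -> [set u; v] \in E -> u != v.
Proof. by move=> tE /(tree_card tE)/card2_neq. Qed.

Lemma tree_acyc E u v : is_tree E -> [set u; v] \in E ->
  ~~ connect (gadj (E :\ [set u; v])) u v.
Proof.
move=> tE ev; have nuv := tree_neq tE ev.
case: tE => _ _ cE acyc; apply/negP=> cuv.
move/negP: (acyc _ ev); apply; apply/icT=> x y.
move/icT: cE => /(_ x y); apply: connect_sub => a b /= /andP[nab abE].
case: (eqVneq [set a; b] [set u; v]) => e.
  case: (pair_eq nab e) => [[-> ->]|[-> ->]] //.
  by rewrite gadj_connect_sym.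
by apply: connect1; rewrite /gadj /= nab in_setD1 e abE.
Qed.

Definition side E u v := [set z | connect (gadj (E :\ [set u; v])) u z].

Lemma side_self E u v : u \in side E u v.
Proof. by rewrite inE connect0. Qed.

Lemma side_closed E u v a b : gadj (E :\ [set u; v]) a b ->
  (a \in side E u v) = (b \in side E u v).
Proof.
move=> ab; rewrite !inE; apply/idP/idP=> H.
  exact: connect_trans H (connect1 ab).
by apply: connect_trans H (connect1 _); rewrite gadj_sym.
Qed.

Lemma side_notv E u v : is_tree E -> [set u; v] \in E -> v \notin side E u v.
Proof. by move=> tE ev; rewrite inE; apply: tree_acyc. Qed.

Lemma side_cover E u v z : is_tree E -> [set u; v] \in E ->
  (z \in side E u v) \/ (z \in side E v u).
Proof.
move=> tE ev.
apply: (@conn_ind (gadj E) (fun z => (z \in side E u v) \/ (z \in side E v u)) u z);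
  [|exact: tree_conn|by left; apply: side_self].
move=> a b /= /andP[nab abE] Ha.
case: (eqVneq [set a; b] [set u; v]) => e.
  have : (b == u) || (b == v).
    have : b \in [set u; v] by rewrite -e !inE eqxx orbT.
    by rewrite !inE.
  case/orP=> /eqP->; [left; exact: side_self|right; exact: side_self].
have ab : gadj (E :\ [set u; v]) a b by rewrite /gadj /= nab in_setD1 e abE.
have ab' : gadj (E :\ [set v; u]) a b by rewrite set2C.
by rewrite -(side_closed ab) -(side_closed ab').
Qed.

Lemma ic_split E S u v x y : induced_connected E S ->
  x \in S -> x \in side E u v -> y \in S -> y \notin side E u v ->
  u \in S /\ v \in S.
Proof.
move=> /icP cS xS xs yS ys.
case: (boolP ((u \in S) && (v \in S))) => [/andP//|nuv]; exfalso.
rewrite negb_and in nuv.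
have cxy := cS x y xS yS.
have c' : connect (gadj (E :\ [set u; v])) x y.
  by apply: conn_mono cxy => a b; apply: rrel_avoid.
move: xs ys; rewrite !inE => xs /negP; apply; exact: connect_trans xs c'.
Qed.

Definition econd E S := forall u v, [set u; v] \in E -> u != v ->
  S \subset side E u v \/ S :&: side E u v = set0 \/ (u \in S /\ v \in S).

Lemma ic_econd E S : induced_connected E S -> econd E S.
Proof.
move=> cS u v _ _.
case: (boolP (S \subset side E u v)) => [|/subsetPn[y yS ys]]; first by left.
right; case: (set_0Vmem (S :&: side E u v)) => [->|[x]]; first by left.
rewrite inE => /andP[xS xs]; right; exact: ic_split cS xS xs yS ys.
Qed.

Lemma econd_ic E S : is_tree E -> econd E S -> induced_connected E S.
Proof.
move=> tE EC; apply/icP=> x y xS yS; apply/negPn/negP=> nc.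
pose C := [set c | connect (rrel S (gadj E)) x c].
have yC : y \notin C by rewrite inE.
have xC : x \in C by rewrite inE connect0.
have CS c : c \in C -> c \in S by rewrite inE => /conn_restr; apply.
pose Y := [set z | connect (rrel (~: C) (gadj E)) y z].
have YC z : z \in Y -> z \notin C.
  rewrite inE => /conn_restr H; have yC' : y \in ~: C by rewrite inE.
  by move: (H yC'); rewrite inE.
have [z [w [zw [zY wY]]]] : exists z w, gadj E z w /\ z \in Y /\ w \notin Y.
  apply: NNPP => H.
  have xY : x \in Y.
    apply: (@conn_ind (gadj E) (fun z => z \in Y) y x); last by rewrite inE connect0.
      move=> a b ab aY; apply/negPn/negP=> bY; apply: H; by exists a, b.
    exact: tree_conn.
  by move: (YC x xY); rewrite xC.
have wC : w \in C.
  apply/negPn/negP=> wC; apply: (negP wY); have zC := YC z zY.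
  move: zY; rewrite [z \in Y]inE [w \in Y]inE => zY.
  apply: connect_trans zY (connect1 _).
  by rewrite /rrel /= !in_setC wC zC.
have zS : z \notin S.
  apply/negP=> zS; apply: (negP (YC z zY)); have wS := CS w wC.
  move: wC; rewrite [w \in C]inE [z \in C]inE => wC.
  apply: connect_trans wC (connect1 _).
  by rewrite /rrel /= zS wS gadj_sym.
move: zw; rewrite /gadj /= => /andP[nzw ezw].
have nwz : w != z by rewrite eq_sym.
have ewz : [set w; z] \in E by rewrite set2C.
have xs : x \in side E w z.
  rewrite inE gadj_connect_sym; move: wC; rewrite inE; apply: conn_mono.
  by move=> a b; apply: rrel_avoid; rewrite zS orbT.
have yz : connect (gadj (E :\ [set w; z])) y z.
  move: zY; rewrite inE; apply: conn_mono.
  by move=> a b; apply: rrel_avoid; rewrite inE negbK wC.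
case: (EC w z ewz nwz) => [sub|[dis|[_ zS']]].
- have := subsetP sub y yS; rewrite inE => wy.
  by move/negP: (tree_acyc tE ewz); apply; exact: connect_trans wy yz.
- by move: (in_set0 x); rewrite -dis inE xS xs.
- by rewrite zS' in zS.
Qed.

Lemma ic_cap E A B : is_tree E -> induced_connected E A -> induced_connected E B ->
  induced_connected E (A :&: B).
Proof.
move=> tE /ic_econd cA /ic_econd cB; apply: econd_ic => // u v ev nuv.
case: (cA u v ev nuv) => [sA|[dA|[uA vA]]].
- by left; apply: subset_trans sA; apply: subsetIl.
- by right; left; rewrite setIAC dA set0I.
case: (cB u v ev nuv) => [sB|[dB|[uB vB]]].
- by left; apply: subset_trans sB; apply: subsetIr.
- by right; left; rewrite -setIA dB setI0.
by right; right; rewrite !inE uA vA uB vB.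
Qed.


Lemma gadjD E e a b : gadj (E :\ e) a b -> gadj E a b.
Proof. by rewrite /gadj /= in_setD1 => /andP[-> /andP[_ ->]]. Qed.

Lemma ic_cup E (F : {set {set T}}) : family_connected F ->
  (forall A, A \in F -> induced_connected E A) ->
  induced_connected E (\bigcup_(A in F) A).
Proof.
move=> fc cF; apply/icP=> x y /bigcupP[A AF xA] /bigcupP[B BF yB].
set U := \bigcup_(A in F) A.
pose C := [set c | connect (rrel U (gadj E)) x c].
have key X : X \in F -> X :&: C != set0 -> X \subset C.
  move=> XF /set0Pn[c]; rewrite inE => /andP[cX]; rewrite inE => cC.
  apply/subsetP=> z zX; rewrite inE.
  move/icP: (cF X XF) => /(_ c z cX zX) cz.
  apply: connect_trans cC (conn_mono _ cz) => a b /and3P[aX bX ab].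
  by rewrite /rrel /= ab !(subsetP (bigcup_sup X XF)) //.
have AC : A :&: C != set0 by apply/set0Pn; exists x; rewrite !inE xA connect0.
have BC : B :&: C != set0.
  move/forall_inP: fc => /(_ A AF) /forall_inP /(_ B BF) cAB.
  apply: (@conn_indG _ _ (fun X => X :&: C != set0) A B _ cAB AC).
  move=> X Y /and3P[XF YF /set0Pn[z zXY]] XC; move: zXY; rewrite inE => /andP[zX zY].
  by apply/set0Pn; exists z; rewrite inE zY (subsetP (key X XF XC)).
have := subsetP (key B BF BC) y yB; by rewrite inE.
Qed.

Lemma side_ic E u v : induced_connected E (side E u v).
Proof.
have H z : z \in side E u v -> connect (rrel (side E u v) (gadj E)) u z.
  move=> zs; have := zs; rewrite inE => cz.
  have P : (fun z => connect (rrel (side E u v) (gadj E)) u z /\ z \in side E u v) z.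
    apply: (@conn_ind _ (fun z => connect (rrel (side E u v) (gadj E)) u z /\ z \in side E u v) u z) cz _; last by split; [apply: connect0|apply: side_self].
    move=> a b ab [ca sa]; have sb : b \in side E u v by rewrite -(side_closed ab).
    split=> //; apply: connect_trans ca (connect1 _).
    by rewrite /rrel /= sa sb (gadjD ab).
  by case: P.
apply/icP=> a b sa sb; apply: connect_trans (H b sb).
by rewrite (sym_connect_sym (rrel_sym _ (gadj_sym E))); apply: H.
Qed.

Lemma ob_ic H E S : host_tree H E -> obtainable H S -> induced_connected E S.
Proof.
move=> [tE hE]; elim=> {S} [e eH|A B _ cA _ cB _|F _ _ IH fc].
- exact: hE.
- exact: ic_cap.
- exact: ic_cup.
Qed.

Lemma ob_n0 H S : (forall e, e \in H -> e != set0) -> obtainable H S -> S != set0.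
Proof.
move=> ne; elim=> {S} [e eH|A B _ _ _ _ //|F F0 _ IH _].
- exact: ne.
case/set0Pn: F0 => A AF; case/set0Pn: (IH A AF) => x xA.
by apply/set0Pn; exists x; apply/bigcupP; exists A.
Qed.

Lemma IcapP (H : hypergraph T) g x :
  reflect (forall f, f \in H -> g \subset f -> x \in f) (x \in Icap H g).
Proof.
rewrite /Icap; elim: H => [|f H IH].
  by rewrite big_nil inE; constructor.
rewrite big_cons; case: ifP => gf.
  rewrite inE; apply: (iffP andP).
    case=> xf /IH xH f'; rewrite inE => /orP[/eqP->//|f'H]; exact: xH.
  move=> Hx; split; first by apply: Hx; rewrite ?inE ?eqxx.
  by apply/IH=> f' f'H; apply: Hx; rewrite inE f'H orbT.
apply: (iffP IH).
  move=> Hx f'; rewrite inE => /orP[/eqP->|]; [by rewrite gf|exact: Hx].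
by move=> Hx f' f'H; apply: Hx; rewrite inE f'H orbT.
Qed.

Lemma Icap_sub (H : hypergraph T) g : g \subset Icap H g.
Proof. by apply/subsetP=> x xg; apply/IcapP=> f _ /subsetP; apply. Qed.

Lemma Icap_le (H : hypergraph T) g f : f \in H -> g \subset f -> Icap H g \subset f.
Proof. by move=> fH gf; apply/subsetP=> x /IcapP; apply. Qed.

Lemma Icap_ob (H : hypergraph T) g : g != set0 -> Icap H g != setT ->
  obtainable H (Icap H g).
Proof.
move=> /set0Pn[x xg].
suff : forall L, {subset L <= H} ->
    \bigcap_(e <- L | g \subset e) e = setT \/ obtainable H (\bigcap_(e <- L | g \subset e) e).
  by rewrite /Icap; move=> /(_ H (fun _ h => h)) [->|//]; rewrite eqxx.
elim=> [|f L IH] LH; first by left; rewrite big_nil.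
have fH : f \in H by apply: LH; rewrite inE eqxx.
have LH' : {subset L <= H} by move=> e h; apply: LH; rewrite inE h orbT.
have := IH LH'.
rewrite big_cons; case: ifP => gf //.
case=> [->|ob]; first by right; rewrite setIT; apply: ob_edge.
right; apply: ob_cap => //; first exact: ob_edge.
apply/set0Pn; exists x; rewrite inE (subsetP gf) //.
have := Icap_sub L g; move/subsetP; apply => //.
Qed.


Lemma two_elems S x : x \in S -> 1 < #|S| -> exists2 y, y \in S & y != x.
Proof.
move=> xS; rewrite (cardsD1 x S) xS add1n ltnS card_gt0 => /set0Pn[y].
by rewrite !inE => /andP[nyx yS]; exists y.
Qed.

Lemma ic_nbr E S x : induced_connected E S -> 1 < #|S| -> x \in S ->
  exists z, [set x; z] \in E /\ [set x; z] \subset S.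
Proof.
move=> /icP cS c2 xS; case: (two_elems xS c2) => y yS nyx.
move/connectP: (cS x y xS yS) => [[|z p]] /=; first by move=> _ yx; rewrite yx eqxx in nyx.
case/andP=> /and3P[_ zS /andP[_ xzE]] _ _; exists z; split=> //.
by apply/subsetP=> w; rewrite !inE => /orP[]/eqP->.
Qed.

Lemma fam_union E S (G : {set T} -> {set T}) :
  is_tree E -> induced_connected E S -> 1 < #|S| ->
  (forall g, g \in E -> g \subset S -> g \subset G g /\ G g \subset S) ->
  [/\ [set G g | g in [set g in E | g \subset S]] != set0,
      family_connected [set G g | g in [set g in E | g \subset S]] &
      \bigcup_(A in [set G g | g in [set g in E | g \subset S]]) A = S].
Proof.
move=> tE cS c2 HG.
set F := [set G g | g in [set g in E | g \subset S]].
have inF g : g \in E -> g \subset S -> G g \in F.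
  by move=> gE gS; apply/imsetP; exists g => //; rewrite inE gE.
have [x0 x0S] : exists x, x \in S.
  by apply/set0Pn; rewrite -card_gt0; apply: ltnW.
split.
- case: (ic_nbr cS c2 x0S) => z [gE gS]; apply/set0Pn; eexists; exact: inF gE gS.
- apply/forall_inP=> A /imsetP[g1]; rewrite inE => /andP[g1E g1S] ->.
  apply/forall_inP=> B /imsetP[g2]; rewrite inE => /andP[g2E g2S] ->.
  have [x1 x1g] : exists x, x \in g1.
    by move/eqP: (tree_card tE g1E) => /cards2P[a [b [_ ->]]]; exists a; rewrite !inE eqxx.
  have [x2 x2g] : exists x, x \in g2.
    by move/eqP: (tree_card tE g2E) => /cards2P[a [b [_ ->]]]; exists a; rewrite !inE eqxx.
  have x1S := subsetP g1S x1 x1g; have x2S := subsetP g2S x2 x2g.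
  set FR := [rel X Y : {set T} | [&& X \in F, Y \in F & X :&: Y != set0]].
  have P2 : exists2 g, [/\ g \in E, g \subset S & x2 \in g] & connect FR (G g1) (G g).
    apply: (@conn_ind _ (fun z => exists2 g, [/\ g \in E, g \subset S & z \in g] &
               connect FR (G g1) (G g)) x1 x2 _ (icP _ _ cS x1 x2 x1S x2S)); last first.
      by exists g1 => //; exact: connect0.
    move=> a b /and3P[aS bS /andP[nab abE]] [g [gE gS ag] cg].
    have hS : [set a; b] \subset S by apply/subsetP=> w; rewrite !inE => /orP[]/eqP->.
    exists [set a; b]; first by rewrite !inE eqxx orbT.
    apply: connect_trans cg (connect1 _).
    rewrite /FR /= (inF g) // (inF _ abE hS) //; apply/set0Pn; exists a.
    rewrite inE (subsetP (proj1 (HG g gE gS))) //.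
    by rewrite (subsetP (proj1 (HG _ abE hS))) // !inE eqxx.
  case: P2 => g [gE gS xg] cg; apply: connect_trans cg (connect1 _).
  rewrite /FR /= (inF g) // (inF g2) //; apply/set0Pn; exists x2.
  by rewrite inE (subsetP (proj1 (HG g gE gS))) // (subsetP (proj1 (HG g2 g2E g2S))).
- apply/setP=> x; apply/bigcupP/idP.
    case=> A /imsetP[g]; rewrite inE => /andP[gE gS] -> xA.
    exact: (subsetP (proj2 (HG g gE gS))).
  move=> xS; case: (ic_nbr cS c2 xS) => z [gE gS].
  exists (G [set x; z]); first exact: inF.
  by rewrite (subsetP (proj1 (HG _ gE gS))) // !inE eqxx.
Qed.


Lemma host_basic (H : hypergraph T) E : is_tree E ->
  (host_tree H E <-> forall S, basic_set H S -> induced_connected E S).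
Proof.
move=> tE; split.
  move=> hE S [cS _]; case: cS => [->|[[x ->]|[ob _]]].
  - by case: tE.
  - by apply: ic_small; rewrite cards1.
  - exact: ob_ic hE ob.
move=> Hb; split=> // e eH.
suff key : forall n S, #|S| <= n -> comp_edge H S -> induced_connected E S.
  apply: (key #|e|) => //; case: (eqVneq e setT) => [->|ne]; first by left.
  by right; right; split=> //; apply: ob_edge.
elim=> [|n IH] S cS ce; first by apply: ic_small; apply: leq_trans cS _.
case: (leqP #|S| 1) => c1; first exact: ic_small.
case: (classic (basic_set H S)) => bS; first exact: Hb.
have [F [F0 FA Fc FU]] : exists F : {set {set T}},
    [/\ F != set0, (forall A, A \in F -> comp_edge H A /\ A \proper S),
        family_connected F & \bigcup_(A in F) A = S].
  by apply: NNPP => nF; apply: bS; split=> //; split.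
rewrite -FU; apply: ic_cup => // A AF; case: (FA A AF) => cA pA.
by apply: IH => //; rewrite -ltnS; apply: leq_trans (proper_card pA) cS.
Qed.

Lemma host_I (H : hypergraph T) E E' : host_tree H E ->
  (host_tree H E' <-> is_tree E' /\ forall g, g \in E -> induced_connected E' (Icap H g)).
Proof.
move=> hE; have tE := hE.1; split.
  move=> hE'; split; first exact: hE'.1.
  move=> g gE; case: (eqVneq (Icap H g) setT) => [->|ns]; first by case: hE'.1.
  apply: ob_ic hE' (Icap_ob _ ns).
  by move/eqP: (tree_card tE gE) => /cards2P[a [b [_ ->]]]; apply/set0Pn; exists a; rewrite !inE eqxx.
move=> [tE' HI]; split=> // f fH.
case: (leqP #|f| 1) => c1; first exact: ic_small.
have [_ Fc FU] := @fam_union E f (Icap H) tE (hE.2 f fH) c1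
   (fun g gE gf => conj (Icap_sub H g) (Icap_le fH gf)).
rewrite -FU; apply: ic_cup => // A /imsetP[g]; rewrite inE => /andP[gE _] ->.
exact: HI.
Qed.

Lemma sub_side E X x u v : induced_connected E X -> x \in X -> x \in side E u v ->
  ~ (u \in X /\ v \in X) -> X \subset side E u v.
Proof.
move=> cX xX xs nuv; apply/subsetP=> y yX; apply/negPn/negP=> ys.
by apply: nuv; exact: ic_split cX xX xs yX ys.
Qed.

Lemma ob_Icap (H : hypergraph T) E S u v : host_tree H E -> [set u; v] \in E ->
  obtainable H S -> u \in S -> v \in S -> Icap H [set u; v] \subset S.
Proof.
move=> hE ev ob; elim: ob u v ev => {S}.
- move=> e eH u v ev ue ve; apply: Icap_le eH _.
  by apply/subsetP=> w; rewrite !inE => /orP[]/eqP->.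
- move=> A B _ IA _ IB _ u v ev; rewrite !inE => /andP[uA uB] /andP[vA vB].
  by rewrite subsetI IA // IB.
move=> F _ obF IH fc u v ev /bigcupP[Au AuF uAu] /bigcupP[Av AvF vAv].
have [A AF [uA vA]] : exists2 A, A \in F & (u \in A /\ v \in A).
  apply: NNPP=> H0.
  have nuv X : X \in F -> ~ (u \in X /\ v \in X) by move=> XF h; apply: H0; exists X.
  have cF X : X \in F -> induced_connected E X by move=> XF; apply: ob_ic hE (obF X XF).
  have sAu : Au \subset side E u v.
    exact: sub_side (cF _ AuF) uAu (side_self E u v) (nuv _ AuF).
  move/forall_inP: fc => /(_ Au AuF) /forall_inP /(_ Av AvF) cAB.
  have sAv : Av \subset side E u v.
    refine (@conn_indG _ _ (fun X : {set T} => X \subset side E u v) Au Av _ cAB sAu).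
    move=> X Y /and3P[XF YF /set0Pn[z zXY]] XS; move: zXY; rewrite inE => /andP[zX zY].
    exact: sub_side (cF _ YF) zY (subsetP XS z zX) (nuv _ YF).
  by move/negP: (side_notv hE.1 ev); apply; apply: (subsetP sAv).
apply: subset_trans (IH A AF u v ev uA vA) _.
exact: bigcup_sup.
Qed.

Lemma set2_neq x y a b : [set x; y] = [set a; b] :> {set T} -> a != b -> x != y.
Proof.
move=> e nab; apply/negP=> /eqP exy; move: e; rewrite exy setUid => e.
have : a \in [set y] by rewrite e !inE eqxx.
have : b \in [set y] by rewrite e !inE eqxx orbT.
by rewrite !inE => /eqP eb /eqP ea; rewrite ea eb eqxx in nab.
Qed.

Definition swap E u v a b : {set {set T}} := E :\ [set u; v] :|: [set [set a; b]].

Lemma swap_gadj E u v a b x y : gadj (E :\ [set u; v]) x y -> gadj (swap E u v a b) x y.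
Proof.
by rewrite /gadj /swap /= in_setU => /andP[-> ->].
Qed.

Lemma swap_gadjP E u v a b x y : gadj (swap E u v a b) x y ->
  x != y /\ ([set x; y] = [set a; b] \/ gadj (E :\ [set u; v]) x y).
Proof.
move=> /andP[nxy]; rewrite /swap in_setU in_set1 => /orP[h|/eqP e].
  2: split; [exact: nxy|left; exact: e].
split; [exact: nxy|right]; by rewrite /gadj /= nxy h.
Qed.

Lemma sep_ic E (Z : {set T}) p q : (forall x y, gadj E x y -> (x \in Z) = (y \in Z)) ->
  p \in Z -> q \notin Z -> ~~ induced_connected E setT.
Proof.
move=> cl pZ qZ; apply/negP=> /icT /(_ p q) c.
have : q \in Z.
  by apply: (@conn_ind _ (fun z => z \in Z) p q _ c pZ) => x y xy xZ; rewrite -(cl x y xy).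
by rewrite (negbTE qZ).
Qed.

Lemma swap_tree E u v a b : is_tree E -> [set u; v] \in E ->
  a \in side E u v -> b \notin side E u v -> is_tree (swap E u v a b).
Proof.
move=> tE ev as_ bs.
have nab : a != b by apply: contraNneq bs => <-.
have bs' : b \in side E v u by case: (side_cover b tE ev) => // h; rewrite h in bs.
have ev' : [set v; u] \in E by rewrite set2C.
have cuv : connect (gadj (swap E u v a b)) u v.
  apply: connect_trans (_ : connect _ u a) _.
    by move: as_; rewrite inE; apply: conn_mono => x y; apply: swap_gadj.
  apply: connect_trans (connect1 (_ : gadj _ a b)) _.
    by rewrite /gadj /swap /= nab in_setU in_set1 eqxx orbT.
  rewrite gadj_connect_sym; move: bs'; rewrite inE set2C; apply: conn_mono.
  by move=> x y; apply: swap_gadj.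
case: (tE) => tn _ _ _; split=> //.
- move=> f; rewrite /swap in_setU in_set1 => /orP[|/eqP->].
    by rewrite in_setD1 => /andP[_ fE]; exact: tree_card tE fE.
  by rewrite cards2 nab.
- apply/icT=> x y; apply: connect_sub (tree_conn tE x y) => p q pq.
  case: (eqVneq [set p; q] [set u; v]) => e.
    case/andP: pq => npq _; case: (pair_eq npq e) => [[-> ->]|[-> ->]] //.
    by rewrite gadj_connect_sym.
  apply: connect1; apply: swap_gadj.
  by case/andP: pq => npq pqE; rewrite /gadj /= npq in_setD1 e pqE.
move=> g; rewrite {1}/swap in_setU in_set1 => /orP[|/eqP gab].
2:{ apply: (@sep_ic _ (side E u v) u v); [|exact: side_self|exact: side_notv].
  move=> x y xy; have := xy; rewrite /gadj /= in_setD1 => /andP[_ /andP[ne _]].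
  case: (swap_gadjP (gadjD xy)) => nxy [e|xy']; last exact: side_closed.
  by rewrite e -gab eqxx in ne. }
rewrite in_setD1 => /andP[ng gE].
case: (eqVneq g [set a; b]) => gab.
  apply: (@sep_ic _ (side E u v) u v); [|exact: side_self|exact: side_notv].
  move=> x y xy; have := xy; rewrite /gadj /= in_setD1 => /andP[_ /andP[ne _]].
  case: (swap_gadjP (gadjD xy)) => nxy [e|xy']; last exact: side_closed.
  by rewrite e -gab eqxx in ne.
move/eqP: (tree_card tE gE) => /cards2P[p [q [npq gpq]]].
have gpqE : [set p; q] \in E by rewrite -gpq.
have pq_uv : (p \in side E u v) = (q \in side E u v).
  by apply: side_closed; rewrite /gadj /= npq in_setD1 -gpq ng gE.
have clE x y : gadj (swap E u v a b :\ g) x y -> [set x; y] = [set a; b] \/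
    (gadj (E :\ [set p; q]) x y /\ gadj (E :\ [set u; v]) x y).
  move=> xy; have := xy; rewrite /gadj /= in_setD1 => /andP[nxy /andP[ne _]].
  case: (swap_gadjP (gadjD xy)) => _ [e|xy']; first by left.
  right; split=> //; move: xy'; rewrite /gadj /= !in_setD1 -gpq ne.
  by case/andP=> -> /andP[_ ->].
case: (eqVneq (a \in side E p q) (b \in side E p q)) => sab.
  apply: (@sep_ic _ (side E p q) p q); [|exact: side_self|exact: side_notv].
  move=> x y /clE [e|[xy _]]; last exact: side_closed.
  have nxy := set2_neq e nab.
  by case: (pair_eq nxy e) => [[-> ->]|[-> ->]].
pose Z := [set z | (z \in side E p q) == (z \in side E u v)].
have Zin z : (z \in Z) = ((z \in side E p q) == (z \in side E u v)).
  exact: in_set.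
have clZ : forall x y, gadj (swap E u v a b :\ g) x y -> (x \in Z) = (y \in Z).
  move=> x y /clE [e|[xy1 xy2]]; last by rewrite !Zin (side_closed xy1) (side_closed xy2).
  have nxy := set2_neq e nab.
  have key : (a \in Z) = (b \in Z).
    rewrite !Zin as_ (negbTE bs) eqbF_neg.
    by move: sab; case: (a \in side E p q); case: (b \in side E p q).
  by case: (pair_eq nxy e) => [[-> ->]|[-> ->]].
have pZ : (p \in Z) = (p \in side E u v) by rewrite Zin side_self.
have qZ : (q \in Z) = ~~ (q \in side E u v).
  by rewrite Zin (negbTE (side_notv tE gpqE)) eq_sym eqbF_neg.
case: (boolP (p \in side E u v)) => ps.
  by apply: (@sep_ic _ Z p q clZ); rewrite ?pZ ?qZ -?pq_uv ?ps.
by apply: (@sep_ic _ Z q p clZ); rewrite ?pZ ?qZ -?pq_uv ?ps.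
Qed.


Lemma swap_host (H : hypergraph T) E u v a b : host_tree H E -> [set u; v] \in E ->
  a \in side E u v -> b \notin side E u v ->
  (host_tree H (swap E u v a b) <-> a \in Icap H [set u; v] /\ b \in Icap H [set u; v]).
Proof.
move=> hE ev as_ bs; have tE := hE.1.
have nab : a != b by apply: contraNneq bs => <-.
split.
  move=> [_ hE'].
  suff K : forall z, (z == a) || (z == b) -> z \in Icap H [set u; v].
    by split; apply: K; rewrite eqxx ?orbT.
  move=> z zab; apply/IcapP=> f fH uvf.
  have uf : u \in f by rewrite (subsetP uvf) // !inE eqxx.
  have vf : v \in f by rewrite (subsetP uvf) // !inE eqxx orbT.
  apply/negPn/negP=> nf; move/negP: (tree_acyc tE ev); apply.
  move/icP: (hE' f fH) => /(_ u v uf vf); apply: conn_mono.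
  move=> x y /and3P[xf yf xy]; case: (swap_gadjP xy) => nxy [e|//].
  case: (pair_eq nxy e) => [[ex ey]|[ex ey]]; rewrite ex ey in xf yf;
    by case/orP: zab => /eqP ez; rewrite ez ?xf ?yf in nf.
move=> [aI bI]; split; first exact: swap_tree.
move=> f fH; apply/icP=> x y xf yf.
case: (boolP ([set u; v] \subset f)) => uvf; last first.
  move/icP: (hE.2 f fH) => /(_ x y xf yf); apply: conn_mono.
  move=> p q pq; have := pq; case/and3P=> pf qf _; rewrite /rrel /= pf qf /=.
  apply: swap_gadj; apply: (rrel_avoid _ pq).
  by apply: contraNT uvf; rewrite negb_or !negbK => /andP[uf vf];
     apply/subsetP=> w; rewrite !inE => /orP[]/eqP->.
have uf : u \in f by rewrite (subsetP uvf) // !inE eqxx.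
have vf : v \in f by rewrite (subsetP uvf) // !inE eqxx orbT.
have af : a \in f by move/IcapP: aI; apply.
have bf : b \in f by move/IcapP: bI; apply.
have mono A a' b' : A \subset f -> v \notin A ->
    connect (rrel A (gadj E)) a' b' -> connect (rrel f (gadj (swap E u v a b))) a' b'.
  move=> Af vA; apply: conn_mono => p q pq; have := pq; case/and3P=> pA qA _.
  rewrite /rrel /= (subsetP Af) ?(subsetP Af q) //; apply: swap_gadj.
  by apply: (rrel_avoid _ pq); rewrite vA orbT.
have ua : connect (rrel f (gadj (swap E u v a b))) u a.
  apply: (mono (f :&: side E u v)); first exact: subsetIl.
    by rewrite inE (negbTE (side_notv tE ev)) andbF.
  by move/icP: (ic_cap tE (hE.2 f fH) (side_ic E u v)); apply; rewrite inE ?uf ?af ?side_self.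
have bs' : b \in side E v u by case: (side_cover b tE ev) => // h; rewrite h in bs.
have ev' : [set v; u] \in E by rewrite set2C.
have vb : connect (rrel f (gadj (swap E u v a b))) v b.
  move/icP: (ic_cap tE (hE.2 f fH) (side_ic E v u)) => /(_ v b).
  rewrite !in_setI vf bf side_self => /(_ isT) /(_ bs') c.
  apply: conn_mono c => p q pq; have := pq; case/and3P=> /setIP[pf _] /setIP[qf _] _.
  rewrite /rrel /= pf qf; apply: swap_gadj; rewrite set2C.
  apply: (rrel_avoid _ pq); rewrite !in_setI (negbTE (side_notv tE ev')) andbF orbT //.
have cuv : connect (rrel f (gadj (swap E u v a b))) u v.
  apply: connect_trans ua (connect_trans (connect1 _) _); last first.
    by rewrite (sym_connect_sym (rrel_sym _ (gadj_sym _))); exact: vb.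
  by rewrite /rrel /= af bf /gadj /= nab /swap in_setU in_set1 eqxx orbT.
move/icP: (hE.2 f fH) => /(_ x y xf yf); apply: connect_sub => p q pq.
have := pq; case/and3P=> pf qf /andP[npq pqE].
case: (eqVneq [set p; q] [set u; v]) => e.
  case: (pair_eq npq e) => [[-> ->]|[-> ->]] //.
  by rewrite (sym_connect_sym (rrel_sym _ (gadj_sym _))).
apply: connect1; rewrite /rrel /= pf qf; apply: swap_gadj.
by rewrite /gadj /= npq in_setD1 e pqE.
Qed.


Lemma equiv_Icap (H1 H2 : hypergraph T) E g : host_tree H1 E -> host_tree H2 E ->
  equivalent H1 H2 -> g \in E -> Icap H1 g = Icap H2 g.
Proof.
move=> h1 h2 eqv gE; have tE := h1.1.
move/eqP: (tree_card tE gE) => /cards2P[u [v [_ guv]]]; subst g.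
have vI H : v \in Icap H [set u; v] by rewrite (subsetP (Icap_sub H _)) // !inE eqxx orbT.
have uI H : u \in Icap H [set u; v] by rewrite (subsetP (Icap_sub H _)) // !inE eqxx.
have vs := side_notv tE gE.
apply/setP=> z; case: (boolP (z \in side E u v)) => zs.
  have K1 := swap_host h1 gE zs vs; have K2 := swap_host h2 gE zs vs.
  have := eqv (swap E u v z v); rewrite K1 K2 => K.
  apply/idP/idP=> zI.
    by case: (proj1 K (conj zI (vI H1))).
  by case: (proj2 K (conj zI (vI H2))).
have K1 := swap_host h1 gE (side_self E u v) zs.
have K2 := swap_host h2 gE (side_self E u v) zs.
have := eqv (swap E u u z z); have := eqv (swap E u v u z); rewrite K1 K2 => K _.
apply/idP/idP=> zI.
  by case: (proj1 K (conj (uI H1) zI)).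
by case: (proj2 K (conj (uI H2) zI)).
Qed.

Lemma comp_transfer (H1 H2 : hypergraph T) E S :
  (forall e, e \in H1 -> e != set0) ->
  host_tree H1 E -> host_tree H2 E -> (forall g, g \in E -> Icap H1 g = Icap H2 g) ->
  comp_edge H1 S -> comp_edge H2 S.
Proof.
move=> ne h1 h2 HI [->|[[x ->]|[ob nT]]]; [by left|by right; left; exists x|].
have tE := h1.1.
case: (leqP #|S| 1) => c1.
  have : #|S| == 1.
    by rewrite eqn_leq c1 card_gt0; apply: ob_n0 ne ob.
  by case/cards1P=> x ->; right; left; exists x.
right; right; split=> //.
have cS := ob_ic h1 ob.
have HG g : g \in E -> g \subset S -> g \subset Icap H2 g /\ Icap H2 g \subset S.
  move=> gE gS; split; first exact: Icap_sub.
  rewrite -HI //; move/eqP: (tree_card tE gE) => /cards2P[u [v [_ guv]]]; subst g.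
  by apply: ob_Icap h1 gE ob _ _; rewrite (subsetP gS) // !inE eqxx ?orbT.
have [F0 Fc FU] := fam_union tE cS c1 HG.
rewrite -FU; apply: ob_cup => // A /imsetP[g]; rewrite inE => /andP[gE gS] ->.
apply: Icap_ob.
  by move/eqP: (tree_card tE gE) => /cards2P[a [b [_ ->]]]; apply/set0Pn; exists a; rewrite !inE eqxx.
apply: contraNneq nT => eT; apply/eqP; apply/setP=> x; rewrite inE.
by have := proj2 (HG g gE gS); rewrite eT => /subsetP; apply; rewrite inE.
Qed.

Lemma basic_transfer (H1 H2 : hypergraph T) :
  (forall S, comp_edge H1 S <-> comp_edge H2 S) ->
  forall S, basic_set H1 S <-> basic_set H2 S.
Proof.
move=> cE.
suff K : forall H H' : hypergraph T, (forall S, comp_edge H S <-> comp_edge H' S) ->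
  forall S, basic_set H S -> basic_set H' S.
  by move=> S; split; apply: K => // S'; split; apply cE.
move=> H H' cE' S [c [c2 nF]]; split; first exact/cE'.
split=> //; move=> [F [F0 FA Fc FU]]; apply: nF; exists F; split=> //.
by move=> A AF; case: (FA A AF) => cA pA; split=> //; apply/cE'.
Qed.

End Aux.

Unset Implicit Arguments.

Theorem mainTheorem6 (T : finType) (H1 H2 : hypergraph T) :
  (forall e, e \in H1 -> e != set0) ->
  (forall e, e \in H2 -> e != set0) ->
  hypertree H1 -> hypertree H2 ->
  (equivalent H1 H2 <-> (forall S, basic_set H1 S <-> basic_set H2 S)) /\
  (forall E : {set {set T}}, host_tree H1 E -> host_tree H2 E ->
     (equivalent H1 H2 <->
      (forall u v : T, [set u; v] \in E ->
         Icap H1 [set u; v] = Icap H2 [set u; v]))).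
Proof.
move=> ne1 ne2 [E1 h1] _; split.
  split.
    move=> eqv; have h2 : host_tree H2 E1 by apply/eqv.
    have HI g : g \in E1 -> Icap H1 g = Icap H2 g by move=> gE; exact: equiv_Icap h1 h2 eqv gE.
    apply: basic_transfer => S; split; first exact: comp_transfer ne1 h1 h2 HI.
    by apply: comp_transfer ne2 h2 h1 _ => g gE; rewrite HI.
  move=> hb E; split=> h.
    apply: (proj2 (host_basic H2 h.1)) => S /hb; exact: (proj1 (host_basic H1 h.1) h).
  apply: (proj2 (host_basic H1 h.1)) => S /hb; exact: (proj1 (host_basic H2 h.1) h).
move=> E hE1 hE2; split.
  by move=> eqv u v uvE; exact: equiv_Icap hE1 hE2 eqv uvE.
move=> HI.
have HI' g : g \in E -> Icap H1 g = Icap H2 g.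
  move=> gE; move/eqP: (tree_card hE1.1 gE) => /cards2P[u [v [_ guv]]]; subst g.
  exact: HI.
move=> E'; rewrite (host_I _ hE1) (host_I _ hE2).
split=> [[t K]|[t K]]; split=> // g gE; [rewrite -HI'|rewrite HI'] => //; exact: K.
Qed.
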